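(* For every $n\ge0$, the priority lattice $\Pi(n)$ is a graded lattice.
   Context: For $n\ge0$ let $[n]_0=\{0,1,\dots,n\}$. A priority forest on $[n]_0$ is a rooted forest with vertex set $[n]_0$ whose component trees $T_0,T_1,\dots$ are increasing (each non-root vertex has a larger label than its parent) and satisfy: for $j<k$ every label of $T_j$ is smaller than every label of $T_k$. The priority lattice $\Pi(n)$ is the set of all priority forests on $[n]_0$ together with an extra element $\hat1$, partially ordered by $P\le P'$ iff $E(P)\subseteq E(P')$ for priority forests $P,P'$, and with $\hat1$ greater than every other element. Its bottom element $\hat0$ is the forest with no edges. *)

(* Defs.v *)
From mathcomp Require Import all_boot all_order.
Set Implicit Arguments. Unset Strict Implicit. Unset Printing Implicit Defensive.

(* Vertices of [n]_0 = {0,...,n} are the elements of 'I_n.+1.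
   A forest is given by its (directed) edge set: (p, c) means p is the
   parent of c. *)
Definition vtx (n : nat) := 'I_n.+1.
Definition edgeset (n : nat) := {set (vtx n * vtx n)}.

Definition adj n (E : edgeset n) : rel (vtx n) :=
  fun x y => ((x, y) \in E) || ((y, x) \in E).

(* Such an edge set is automatically acyclic. *)
Definition increasing_rooted_forest n (E : edgeset n) : bool :=
  [forall e in E, (e.1 < e.2)%N] &&
  [forall c : vtx n, #|[set p : vtx n | (p, c) \in E]| <= 1].

(* The component trees T_0, T_1, ... can be ordered so that all labels of T_j
   are smaller than all labels of T_k for j < k; equivalently, each component
   (connected component for the undirected adjacency) is an interval of labels. *)
Definition components_ordered n (E : edgeset n) : bool :=
  [forall i : vtx n, forall j : vtx n, forall k : vtx n,
     ((i < j)%N && (j < k)%N && connect (adj E) i k) ==> connect (adj E) i j].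

Definition priority_forest n (E : edgeset n) : bool :=
  increasing_rooted_forest E && components_ordered E.

(* Elements of Pi(n): Some P for a priority forest P, None for the top 1^. *)
Definition PF (n : nat) := {E : edgeset n | priority_forest E}.
Definition Pi (n : nat) := option (PF n).

Definition Pi_le n (x y : Pi n) : bool :=
  match x, y with
  | _, None => true
  | None, Some _ => false
  | Some P, Some Q => val P \subset val Q
  end.

Section PosetNotions.
Variables (T : finType) (le : rel T).

Definition is_upper_bound (x y z : T) := le x z && le y z.
Definition is_lower_bound (x y z : T) := le z x && le z y.

Definition is_lattice : Prop :=
  forall x y : T,
    (exists z, is_upper_bound x y z /\ forall w, is_upper_bound x y w -> le z w) /\
    (exists z, is_lower_bound x y z /\ forall w, is_lower_bound x y w -> le w z).

Definition is_chain (C : {set T}) : bool :=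
  [forall x in C, forall y in C, le x y || le y x].

Definition is_maximal_chain (C : {set T}) : bool :=
  is_chain C && [forall D : {set T}, (C \proper D) ==> ~~ is_chain D].

Definition is_graded : Prop :=
  forall C D : {set T}, is_maximal_chain C -> is_maximal_chain D -> #|C| = #|D|.
End PosetNotions.

Definition is_poset (T : Type) (le : rel T) : Prop :=
  (forall x, le x x) /\ (forall x y, le x y -> le y x -> x = y) /\
  (forall x y z, le x y -> le y z -> le x z).

(* Main.v *)
Require Import Defs.
From mathcomp Require Import all_boot all_order.
From mathcomp Require Import zify.
Set Implicit Arguments. Unset Strict Implicit. Unset Printing Implicit Defensive.

Section Graded.
Variables (T : finType) (le : rel T) (r : T -> nat) (bot top : T).
Hypothesis le_refl : forall x, le x x.
Hypothesis le_trans : forall x y z, le x y -> le y z -> le x z.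
Hypothesis le_bot : forall x, le bot x.
Hypothesis le_top : forall x, le x top.
Hypothesis rbot : r bot = 0.
Hypothesis r_mono : forall x y, le x y -> x != y -> r x < r y.
Hypothesis gap : forall x y, le x y -> (r x).+1 < r y ->
  exists w, [/\ le x w, le w y, w != x & w != y].

Lemma r_le x y : le x y -> r x <= r y.
Proof. by move=> h; case: (eqVneq x y) => [->//|ne]; apply: ltnW; apply: r_mono. Qed.

Lemma maxchain_card C : is_maximal_chain le C -> #|C| = (r top).+1.
Proof.
move=> /andP[ch mx].
have chP : forall x y, x \in C -> y \in C -> le x y || le y x.
  by move=> x y xC yC; move/forallP: ch => /(_ x); rewrite xC /= => /forallP /(_ y); rewrite yC.
have ext : forall w, w \notin C -> (forall z, z \in C -> le z w || le w z) -> False.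
  move=> w wC H.
  have hc : is_chain le (w |: C).
    apply/forallP => x; apply/implyP => /setU1P xC; apply/forallP => y; apply/implyP => /setU1P yC.
    case: xC => [->|xC]; case: yC => [->|yC]; rewrite ?le_refl //.
    + by rewrite orbC; apply: H.
    + by apply: H.
    + by apply: chP.
  have hp : C \proper w |: C.
    rewrite properE subsetUr /=; apply/negP => /subsetP /(_ w (setU11 _ _)); apply/negP; exact: wC.
  by move: (forallP mx (w |: C)); rewrite hp hc.
have botC : bot \in C.
  by apply: contraT => nb; exfalso; apply: ext nb _ => z _; rewrite le_bot orbT.
have topC : top \in C.
  by apply: contraT => nb; exfalso; apply: ext nb _ => z _; rewrite le_top.
have rtop : forall x, r x <= r top by move=> x; apply: r_le.
have rinj : {in C &, injective r}.
  move=> x y xC yC rxy; apply/eqP; apply: contraT => neq.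
  case/orP: (chP x y xC yC) => lexy.
  - by have := r_mono lexy neq; rewrite rxy ltnn.
  - by rewrite eq_sym in neq; have := r_mono lexy neq; rewrite rxy ltnn.
pose f := fun x => (inord (r x) : 'I_(r top).+1).
have finj : {in C &, injective f}.
  move=> x y xC yC /(congr1 val); rewrite /f /= !inordK ?ltnS ?rtop //; exact: rinj.
rewrite -(card_in_imset finj).
suff -> : f @: C = setT by rewrite cardsT card_ord.
apply/eqP; rewrite eqEsubset subsetT /=; apply/subsetP => k _.
apply: contraT => kn.
have kC : forall z, z \in C -> r z != k.
  move=> z zC; apply/negP => /eqP ek; move/negP: kn; apply; apply/imsetP; exists z => //.
  by apply: val_inj; rewrite /f /= inordK ek.
have k0 : 0 < k by rewrite lt0n; have := kC _ botC; rewrite rbot eq_sym.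
have kt : k < r top by rewrite ltn_neqAle -ltnS ltn_ord andbT; have := kC _ topC; rewrite eq_sym.
have P0 : (bot \in C) && (r bot < k) by rewrite botC rbot.
have P1 : (top \in C) && (k < r top) by rewrite topC.
case: (@arg_maxnP _ bot (fun z => (z \in C) && (r z < k)) r P0) => x /andP[xC xk] xmax.
case: (@arg_minnP _ top (fun z => (z \in C) && (k < r z)) r P1) => y /andP[yC ky] ymin.
have lexy : le x y.
  case/orP: (chP x y xC yC) => // leyx; have := r_le leyx => h.
  by have := leq_ltn_trans h xk; rewrite ltnNge ltnW.
have [w [xw wy wx wy']] := gap lexy (leq_ltn_trans xk ky).
rewrite eq_sym in wx.
have rxw := r_mono xw wx.
have rwy := r_mono wy wy'.
have wC : w \notin C.
  apply/negP => wC; have := kC _ wC; case: ltngtP => // h _.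
  + by have := xmax w; rewrite wC h => /(_ isT) /=; rewrite leqNgt rxw.
  + by have := ymin w; rewrite wC h => /(_ isT) /=; rewrite leqNgt rwy.
exfalso; apply: (ext w wC) => z zC; have := kC _ zC; case: ltngtP => // h _.
- have := xmax z; rewrite zC h => /(_ isT) /= hz.
  case/orP: (chP z x zC xC) => hzx; first by rewrite (le_trans hzx xw).
  case: (eqVneq x z) => [<-|nxz]; first by rewrite xw.
  by have := r_mono hzx nxz; rewrite ltnNge hz.
- have := ymin z; rewrite zC h => /(_ isT) /= hz.
  case/orP: (chP z y zC yC) => hzy; last by rewrite (le_trans wy hzy) orbT.
  case: (eqVneq z y) => [->|nzy]; first by rewrite wy orbT.
  by have := r_mono hzy nzy; rewrite ltnNge hz.
Qed.
End Graded.
Section Forest.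
Variable n : nat.
Implicit Types (E F A B : edgeset n) (u v w p c : vtx n).

Definition inc E := increasing_rooted_forest E.
Definition hasp E c := [exists p, (p, c) \in E].
Definition Qp E := [forall w : vtx n, hasp E w ==> connect (adj E) (inord w.-1) w].

Lemma connect_symE E : connect_sym (adj E).
Proof. by apply: sym_connect_sym => x y; rewrite /adj orbC. Qed.

Lemma inc_edge E e : inc E -> e \in E -> (e.1 < e.2)%N.
Proof. by move=> /andP[/forallP h _] eE; move: (h e); rewrite eE. Qed.

Lemma uniq_par E a b c : inc E -> (a, c) \in E -> (b, c) \in E -> a = b.
Proof.
move=> /andP[_ /forallP /(_ c)] /card_le1P h ha hb.
have := h a; rewrite inE ha => /(_ isT b); rewrite !inE hb => /esym /eqP //.
Qed.

Lemma connect_mono E F x y : E \subset F -> connect (adj E) x y -> connect (adj F) x y.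
Proof.
move=> s; apply: connect_sub => a b h; apply: connect1; move: h.
by rewrite /adj => /orP[h|h]; rewrite (subsetP s _ h) ?orbT.
Qed.

Lemma path_closed (T : finType) (e : rel T) (a : pred T) :
  (forall x y, a x -> e x y -> a y) -> forall x (s : seq T), a x -> path e x s -> a (last x s).
Proof.
move=> cl x s; elim: s x => //= y p IH x ax /andP[exy pp]; apply: IH pp; exact: cl ax exy.
Qed.

Lemma dir_le E w x : inc E -> connect (fun a b => (a, b) \in E) w x -> (w <= x)%N.
Proof.
move=> hE /connectP [p pp ->]; elim: p w pp => //= y p IH z /andP [hzy pp].
have lt := inc_edge hE hzy; exact: leq_trans (ltnW lt) (IH _ pp).
Qed.

Lemma root_le E w u : inc E -> ~~ hasp E w -> connect (adj E) w u -> (w <= u)%N.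
Proof.
move=> hE hw /connectP [p pp ->]; apply: (dir_le hE).
pose de := fun a b : vtx n => (a, b) \in E.
apply: (@path_closed _ (adj E) (fun x => connect de w x)) pp; last exact: connect0.
move=> x y /= hx /orP [h|h]; first by apply: connect_trans hx (connect1 _).
move/connectP: hx => [q qq ex]; case/lastP: q qq ex => [|q z] qq ex.
  by rewrite /= in ex; subst x; case/negP: hw; apply/existsP; exists y.
rewrite rcons_path in qq; case/andP: qq => qq hz; rewrite last_rcons in ex; subst z.
by rewrite (uniq_par hE h hz); apply/connectP; exists q.
Qed.

Lemma chain_conn E u v : Qp E -> (u <= v)%N ->
  (forall w : vtx n, (u < w <= v)%N -> hasp E w) -> connect (adj E) u v.
Proof.
move=> hQ; suff: forall d (v : vtx n), nat_of_ord v = (u + d)%N -> (u <= v)%N ->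
  (forall w : vtx n, (u < w <= v)%N -> hasp E w) -> connect (adj E) u v.
  by move=> H uv; apply: (H (v - u)%N) => //; rewrite subnKC.
elim=> [|d IH] {}v ev uv h.
  by have -> : v = u by apply: val_inj; rewrite /= ev addn0.
have hv : hasp E v by apply: h; apply/andP; split; lia.
have := forallP hQ v; rewrite hv /= => hc; apply: connect_trans hc.
have vn : (v.-1 < n.+1)%N by have := ltn_ord v; lia.
apply: IH.
- by rewrite inordK //; lia.
- by rewrite inordK //; lia.
- move=> w; rewrite inordK // => /andP[a b]; apply: h; apply/andP; split; lia.
Qed.

Lemma pf_Q E : priority_forest E -> Qp E.
Proof.
move=> /andP[hE co]; apply/forallP => w; apply/implyP => /existsP [q hq].
have lt := inc_edge hE hq; rewrite /= in lt.
have cqw : connect (adj E) q w by apply: connect1; rewrite /adj hq.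
have vn : (w.-1 < n.+1)%N by have := ltn_ord w; lia.
case: (eqVneq (val q) w.-1) => e.
  by have -> : inord w.-1 = q by apply: val_inj; rewrite /= inordK // e.
have hco : connect (adj E) q (inord w.-1).
  move/forallP: co => /(_ q) /forallP /(_ (inord w.-1)) /forallP /(_ w) /implyP; apply.
  have e' : nat_of_ord q <> w.-1 by move/eqP: e.
  rewrite inordK // cqw andbT; apply/andP; split; lia.
rewrite connect_symE in hco; exact: connect_trans hco cqw.
Qed.

Lemma Q_co E : inc E -> Qp E -> components_ordered E.
Proof.
move=> hE hQ; apply/forallP => i; apply/forallP => j; apply/forallP => k.
apply/implyP => /andP[/andP[ij jk] cik].
suff H : forall w : vtx n, (i < w <= k)%N -> hasp E w.
  apply: chain_conn => //; first exact: ltnW.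
  by move=> w /andP[a b]; apply: H; rewrite a (leq_trans b (ltnW jk)).
move=> w wik; apply: contraT => nw.
have Pw : (fun x : vtx n => (i < x <= k)%N && ~~ hasp E x) w by rewrite /= wik nw.
case: (@arg_maxnP _ w (fun x : vtx n => (i < x <= k)%N && ~~ hasp E x) val Pw).
move=> w' /andP[w'ik nw'] wmax.
have cw'k : connect (adj E) w' k.
  apply: chain_conn => //; first by case/andP: w'ik.
  move=> x /andP[a b]; apply: contraT => nx; have := wmax x.
  have -> : (i < x <= k)%N by apply/andP; split => //; case/andP: w'ik => c _; lia.
  by rewrite nx /= leqNgt a => /(_ isT).
have : connect (adj E) w' i by apply: connect_trans cw'k _; rewrite connect_symE.
move/(root_le hE nw'); case/andP: w'ik; lia.
Qed.

Lemma Q_pf E : inc E -> Qp E -> priority_forest E.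
Proof. by move=> hE hQ; apply/andP; split => //; apply: Q_co. Qed.

Lemma card_pf E : inc E -> #|E| = #|[set e.2 | e in E]|.
Proof.
move=> hE; rewrite card_in_imset // => [[a c] [b d]] h1 h2 /= ed; subst d.
by rewrite (uniq_par hE h1 h2).
Qed.

Lemma im_sub E : inc E -> [set e.2 | e in E] \subset [set~ ord0].
Proof.
move=> hE; apply/subsetP => _ /imsetP[e eE ->]; rewrite !inE.
have := inc_edge hE eE; apply: contraTneq => ->; by [].
Qed.

Lemma card_le_n E : inc E -> (#|E| <= n)%N.
Proof.
move=> hE; rewrite card_pf //; apply: leq_trans (subset_leq_card (im_sub hE)) _.
by rewrite cardsC1 card_ord.
Qed.

Lemma exists_root E : inc E -> (#|E| < n)%N -> exists c : vtx n, (c != ord0) && ~~ hasp E c.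
Proof.
move=> hE lt; apply/existsP; apply: contraTT lt => /existsPn H.
rewrite -leqNgt card_pf //.
apply: leq_trans (_ : n <= #|[set~ (ord0 : vtx n)]|)%N _; first by rewrite cardsC1 card_ord.
apply: subset_leq_card; apply/subsetP => c; rewrite !inE => c0.
have := H c; rewrite c0 /= negbK => /existsP[p hp]; apply/imsetP; by exists (p, c).
Qed.

Lemma ext_pf E p c : priority_forest E -> ~~ hasp E c -> (p < c)%N ->
  connect (adj E) p (inord c.-1) -> priority_forest ((p, c) |: E).
Proof.
move=> hpf hc pc hconn; have hE : inc E by case/andP: hpf.
have hE' : inc ((p, c) |: E).
  apply/andP; split.
    apply/forallP => e; apply/implyP; rewrite !inE => /orP[/eqP->//|]; exact: inc_edge hE.
  apply/forallP => w; case: (eqVneq w c) => [->|ne].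
    apply: leq_trans (_ : #|[set p]| <= 1)%N; last by rewrite cards1.
    apply: subset_leq_card; apply/subsetP => q; rewrite !inE => /orP[/eqP[->]|hq] //.
    by case/negP: hc; apply/existsP; exists q.
  apply: leq_trans (_ : #|[set q | (q, w) \in E]| <= 1)%N.
    apply: subset_leq_card; apply/subsetP => q; rewrite !inE => /orP[/eqP[_ ew]|//].
    by rewrite ew eqxx in ne.
  by case/andP: hE => _ /forallP.
apply: Q_pf hE' _; apply/forallP => w; apply/implyP => /existsP[q]; rewrite !inE.
case/orP => [/eqP[_ ->]|hq].
  apply: connect_trans (_ : connect _ _ p) (connect1 _); last by rewrite /adj setU11.
  by rewrite connect_symE; apply: connect_mono hconn; apply: subsetUr.
have := forallP (pf_Q hpf) w; rewrite (_ : hasp E w) /=; last by apply/existsP; exists q.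
by apply: connect_mono; apply: subsetUr.
Qed.

Lemma inc_sub E F : E \subset F -> inc F -> inc E.
Proof.
move=> s hF; apply/andP; split.
  apply/forallP => e; apply/implyP => h; exact: inc_edge hF (subsetP s e h).
apply/forallP => w; apply: leq_trans (_ : #|[set q | (q, w) \in F]| <= 1)%N.
  by apply: subset_leq_card; apply/subsetP => q; rewrite !inE => h; apply: (subsetP s).
by case/andP: hF => _ /forallP.
Qed.

Lemma union_pf A B F : priority_forest A -> priority_forest B ->
  A \subset F -> B \subset F -> inc F -> priority_forest (A :|: B).
Proof.
move=> hA hB sA sB hF; apply: Q_pf; first by apply: inc_sub hF; rewrite subUset sA.
apply/forallP => w; apply/implyP => /existsP[q]; rewrite inE => /orP[h|h].
  have := forallP (pf_Q hA) w; rewrite (_ : hasp A w) /=; last by apply/existsP; exists q.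
  by apply: connect_mono; apply: subsetUl.
have := forallP (pf_Q hB) w; rewrite (_ : hasp B w) /=; last by apply/existsP; exists q.
by apply: connect_mono; apply: subsetUr.
Qed.

Lemma pf0 : priority_forest (set0 : edgeset n).
Proof.
apply: Q_pf.
  apply/andP; split; first by apply/forallP => e; rewrite inE.
  apply/forallP => w; rewrite (_ : [set q | _] = set0) ?cards0 //.
  by apply/setP => q; rewrite !inE.
by apply/forallP => w; apply/implyP => /existsP[q]; rewrite inE.
Qed.

Lemma proper_ext P P' : priority_forest P -> priority_forest P' -> P \proper P' ->
  exists p c, [/\ ~~ hasp P c, (p, c) \in P' & priority_forest ((p, c) |: P)].
Proof.
move=> hP hP' /properP [sub [e0 e0P' e0P]].
have incP' : inc P' by case/andP: hP'.
have ex : (fun c => ~~ hasp P c && hasp P' c) e0.2.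
  rewrite /=; apply/andP; split; last by apply/existsP; exists e0.1; rewrite -surjective_pairing.
  apply/existsP => -[q hq].
  have e0P'' : (e0.1, e0.2) \in P' by rewrite -surjective_pairing.
  have := uniq_par incP' (subsetP sub _ hq) e0P'' => eq; subst q.
  by move: hq; rewrite -surjective_pairing (negbTE e0P).
case: (@arg_minnP _ e0.2 (fun c => ~~ hasp P c && hasp P' c) val ex).
move=> c /andP[hcP hcP'] cmin.
case/existsP: hcP' => p hp; exists p, c; split => //.
have pc := inc_edge incP' hp; rewrite /= in pc.
have vn : (c.-1 < n.+1)%N by have := ltn_ord c; lia.
apply: (ext_pf hP hcP pc).
have hcv : nat_of_ord (inord c.-1 : vtx n) = c.-1 by rewrite inordK.
apply: chain_conn (pf_Q hP) _ _; rewrite hcv; first lia.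
move=> w /andP[pw wc]; apply: contraT => nw.
have nw' : ~~ hasp P' w.
  apply/negP => hw'; have := cmin w; rewrite nw hw' => /(_ isT) /= cw.
  have : (c <= c.-1)%N by apply: leq_trans cw wc.
  move: pc; clear; lia.
have cpw : connect (adj P') p w.
  case/andP: hP' => _ /forallP /(_ p) /forallP /(_ w) /forallP /(_ c) /implyP; apply.
  rewrite pw /=; apply/andP; split.
    move: pc wc; clear; lia.
  by apply: connect1; rewrite /adj hp.
have cwp : connect (adj P') w p by rewrite connect_symE.
have := root_le incP' nw' cwp; by rewrite leqNgt pw.
Qed.

End Forest.
Section Main.
Variable n : nat.

Definition rk (x : Pi n) : nat := if x is Some P then #|val P| else n.+1.
Definition botPi : Pi n := Some (exist _ set0 (pf0 n)).

Lemma Pi_refl (x : Pi n) : Pi_le x x.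
Proof. by case: x => //= P; exact: subxx. Qed.

Lemma Pi_anti (x y : Pi n) : Pi_le x y -> Pi_le y x -> x = y.
Proof.
case: x y => [P|] [Q|] //= h1 h2; congr Some; apply: val_inj; apply/eqP.
by rewrite eqEsubset h1 h2.
Qed.

Lemma Pi_trans (x y z : Pi n) : Pi_le x y -> Pi_le y z -> Pi_le x z.
Proof. by case: x y z => [P|] [Q|] [R|] //=; exact: subset_trans. Qed.

Lemma Pi_bot (x : Pi n) : Pi_le botPi x.
Proof. by case: x => //= P; exact: sub0set. Qed.

Lemma Pi_top (x : Pi n) : Pi_le x None.
Proof. by case: x. Qed.

Lemma rk_bot : rk botPi = 0.
Proof. by rewrite /= cards0. Qed.

Lemma incP (P : PF n) : inc (val P).
Proof. by case/andP: (valP P). Qed.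

Lemma rk_mono (x y : Pi n) : Pi_le x y -> x != y -> (rk x < rk y)%N.
Proof.
case: x y => [P|] [Q|] //= h ne.
- apply: proper_card; rewrite properEneq h andbT.
  by apply: contraNneq ne => /val_inj ->.
- by rewrite ltnS; apply: card_le_n; apply: incP.
Qed.

Definition mkPF (E : edgeset n) (h : priority_forest E) : PF n := exist _ E h.

Lemma some_neq (P : PF n) E (h : priority_forest E) : E != val P -> Some (mkPF h) != Some P :> Pi n.
Proof. by move=> ne; apply/eqP => e; move: ne; case: e => <-; rewrite eqxx. Qed.

Lemma rk_gap (x y : Pi n) : Pi_le x y -> (rk x).+1 < rk y ->
  exists w, [/\ Pi_le x w, Pi_le w y, w != x & w != y].
Proof.
case: x y => [P|] [Q|] //= h lt.
- have [p [c [hc hpc hpf]]] : exists p c, [/\ ~~ hasp (val P) c, (p, c) \in val Q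
      & priority_forest ((p, c) |: val P)].
    apply: proper_ext; [exact: valP | exact: valP |].
    by rewrite properEcard h /=; apply: ltnW.
  have nin : (p, c) \notin val P by apply: contra hc => hh; apply/existsP; exists p.
  exists (Some (mkPF hpf)); split => //=.
  + exact: subsetUr.
  + by rewrite subUset sub1set hpc h.
  + apply: some_neq; apply: contra nin => /eqP <-; exact: setU11.
  + apply/eqP => -[] e; move: lt; rewrite -e cardsU1 nin /= ltnn //.
- have [c /andP[c0 hc]] := exists_root (incP P) (lt : (#|val P| < n)%N).
  have cpos : (0 < c)%N by rewrite lt0n.
  have vn : (c.-1 < n.+1)%N by have := ltn_ord c; lia.
  have pc : (nat_of_ord (inord c.-1 : vtx n) < c)%N by rewrite inordK //; lia.
  have hpf := ext_pf (valP P) hc pc (connect0 _ _).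
  have nin : ((inord c.-1 : vtx n), c) \notin val P
    by apply: contra hc => hh; apply/existsP; exists (inord c.-1).
  exists (Some (mkPF hpf)); split => //=.
  + exact: subsetUr.
  + apply: some_neq; apply: contra nin => /eqP <-; exact: setU11.
- by rewrite ltnNge leqnSn in lt.
Qed.

Definition Ucap (X : {set Pi n}) : edgeset n :=
  \bigcup_(A : PF n | [forall P : PF n, (Some P \in X) ==> (val A \subset val P)]) val A.
Definition bigMeet (X : {set Pi n}) : Pi n :=
  if [exists P : PF n, Some P \in X] then insub (Ucap X) else None.

Lemma Ucap_pf (X : {set Pi n}) (P0 : PF n) : Some P0 \in X -> priority_forest (Ucap X).
Proof.
move=> h0; suff: priority_forest (Ucap X) && (Ucap X \subset val P0) by case/andP.
apply: (big_ind (fun S => priority_forest S && (S \subset val P0))).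
- by rewrite pf0 sub0set.
- move=> S1 S2 /andP[h1 s1] /andP[h2 s2]; rewrite subUset s1 s2 andbT.
  rewrite andbT; exact: union_pf h1 h2 s1 s2 (incP P0).
- move=> A /forallP /(_ P0); rewrite h0 /= => s; by rewrite (valP A) s.
Qed.

Lemma bigMeet_lb (X : {set Pi n}) (x : Pi n) : x \in X -> Pi_le (bigMeet X) x.
Proof.
case: x => [P|] hx; last by case: (bigMeet X).
have ex : [exists P, Some P \in X] by apply/existsP; exists P.
rewrite /bigMeet ex (insubT _ (Ucap_pf hx)) /=.
by apply/bigcupsP => A /forallP /(_ P); rewrite hx.
Qed.

Lemma bigMeet_glb (X : {set Pi n}) (w : Pi n) : (forall x, x \in X -> Pi_le w x) -> Pi_le w (bigMeet X).
Proof.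
case: w => [W|] h; rewrite /bigMeet; case: ifP => // /existsP [P0 h0].
  rewrite (insubT _ (Ucap_pf h0)) /= /Ucap; apply: (bigcup_sup W).
  by apply/forallP => P; apply/implyP => hP; exact: h _ hP.
by have := h _ h0.
Qed.

Lemma Pi_lattice : is_lattice (@Pi_le n).
Proof.
move=> x y; split.
- exists (bigMeet [set w | Pi_le x w && Pi_le y w]); split.
  + by apply/andP; split; apply: bigMeet_glb => w; rewrite inE => /andP[].
  + by move=> w hw; apply: bigMeet_lb; rewrite inE.
- exists (bigMeet [set x; y]); split.
  + by apply/andP; split; apply: bigMeet_lb; rewrite !inE eqxx ?orbT.
  + by move=> w /andP[h1 h2]; apply: bigMeet_glb => z; rewrite !inE => /orP[]/eqP->.
Qed.

Lemma Pi_graded : is_graded (@Pi_le n).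
Proof.
move=> C D hC hD.
have H := @maxchain_card (Pi n) (@Pi_le n) rk botPi None Pi_refl Pi_trans Pi_bot Pi_top
  rk_bot rk_mono rk_gap.
by rewrite (H C hC) (H D hD).
Qed.

End Main.

Theorem lemma3p1 (n : nat) :
  is_poset (@Pi_le n) /\ is_lattice (@Pi_le n) /\ is_graded (@Pi_le n).
Proof.
split; first by split; [exact: Pi_refl | split; [exact: Pi_anti | exact: Pi_trans]].
split; [exact: Pi_lattice | exact: Pi_graded].
Qed.
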